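(* The plactic monoid $\mathcal P_3$ of rank $3$ satisfies every semigroup identity satisfied by the monoid $\mathrm{TMat}_3(\mathbb T)$ of $3\times3$ upper triangular tropical matrices. In particular, with $\widetilde w=yx^2y^2x$, $\mathcal P_3$ satisfies $\widetilde w\,x\,\widetilde w=\widetilde w\,y\,\widetilde w$ upon substituting $x=uv$ and $y=vu$ for arbitrary $u,v\in\mathcal P_3$.
   Context: $\mathcal P_3=\mathcal A_3^*/{\equiv_{\mathrm{knu}}}$ with $\mathcal A_3=\{a_1<a_2<a_3\}$ and $\equiv_{\mathrm{knu}}$ the congruence generated by $xzy=zxy$ ($x\le y<z$), $yxz=yzx$ ($x<y\le z$). $\mathrm{TMat}_3(\mathbb T)$: upper triangular $3\times 3$ matrices over $\mathbb T=\mathbb R\cup\{-\infty\}$ with max-plus product $(X\odot Y)_{i,j}=\max_t(x_{i,t}+y_{t,j})$. A semigroup identity is a formal equality $u=v$ of two distinct nonempty words in variables; $S$ satisfies it if $\varphi(u)=\varphi(v)$ for every homomorphism $\varphi$ from the free semigroup on the variables into $S$. (It is known from prior work that $\mathrm{TMat}_3(\mathbb T)$ satisfies $\widetilde w\,(AB)\,\widetilde w=\widetilde w\,(BA)\,\widetilde w$ with $\widetilde w=(BA)(AB)^2(BA)^2(AB)$ for all $A,B$.) *)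

(* Defs.v *)
From Stdlib Require Import Reals List Arith.
Import ListNotations.
Open Scope R_scope.

Inductive A3 : Type := a1 | a2 | a3.

Definition rk (a : A3) : nat := match a with a1 => 1 | a2 => 2 | a3 => 3 end%nat.
Definition ltA (a b : A3) : Prop := (rk a < rk b)%nat.
Definition leA (a b : A3) : Prop := (rk a <= rk b)%nat.

Inductive knu : list A3 -> list A3 -> Prop :=
| knu_refl w : knu w w
| knu_sym w w' : knu w w' -> knu w' w
| knu_trans w1 w2 w3 : knu w1 w2 -> knu w2 w3 -> knu w1 w3
| knu_K1 (p q : list A3) (x y z : A3) :
    leA x y -> ltA y z -> knu (p ++ [x; z; y] ++ q) (p ++ [z; x; y] ++ q)
| knu_K2 (p q : list A3) (x y z : A3) :
    ltA x y -> leA y z -> knu (p ++ [y; x; z] ++ q) (p ++ [y; z; x] ++ q).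

(** * Tropical semiring T = R ∪ {-oo} (None = -oo), max-plus *)
Definition trop := option R.
Definition tmax (a b : trop) : trop :=
  match a, b with
  | Some x, Some y => Some (Rmax x y)
  | None, _ => b
  | _, None => a
  end.
Definition tmul (a b : trop) : trop :=
  match a, b with
  | Some x, Some y => Some (x + y)
  | _, _ => None
  end.

(** 3x3 tropical matrices, indices 0,1,2 (entries outside are irrelevant). *)
Definition mat := nat -> nat -> trop.
Definition mmul (X Y : mat) : mat := fun i j =>
  tmax (tmax (tmul (X i 0%nat) (Y 0%nat j)) (tmul (X i 1%nat) (Y 1%nat j)))
       (tmul (X i 2%nat) (Y 2%nat j)).
Definition upper (X : mat) : Prop :=
  forall i j : nat, (i < 3)%nat -> (j < 3)%nat -> (j < i)%nat -> X i j = None.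
Definition meq (X Y : mat) : Prop :=
  forall i j : nat, (i < 3)%nat -> (j < 3)%nat -> X i j = Y i j.

Definition word := list nat.

Definition meval (phi : nat -> mat) (w : word) : mat :=
  match w with
  | [] => fun _ _ => None (* unused: identities are between nonempty words *)
  | x :: w' => fold_left (fun M y => mmul M (phi y)) w' (phi x)
  end.

Definition TMat3_satisfies (u v : word) : Prop :=
  forall phi : nat -> mat, (forall x, upper (phi x)) ->
    meq (meval phi u) (meval phi v).

(** P_3 satisfies u = v: every assignment of elements of P_3 (represented by
    words over A3) to variables gives Knuth-congruent values *)
Definition P3_satisfies (u v : word) : Prop :=
  forall phi : nat -> list A3,
    knu (concat (map phi u)) (concat (map phi v)).

(* Main.v *)
Require Import Defs.
From Stdlib Require Import Reals List Arith Lia Bool.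
Import ListNotations.
Open Scope nat_scope.

Record m6 := M6 { e00 : nat; e01 : nat; e02 : nat; e11 : nat; e12 : nat; e22 : nat }.

Definition mul6 (A B : m6) : m6 :=
  M6 (e00 A + e00 B)
     (max (e00 A + e01 B) (e01 A + e11 B))
     (max (max (e00 A + e02 B) (e01 A + e12 B)) (e02 A + e22 B))
     (e11 A + e11 B)
     (max (e11 A + e12 B) (e12 A + e22 B))
     (e22 A + e22 B).

Lemma m6_eq A B : e00 A = e00 B -> e01 A = e01 B -> e02 A = e02 B ->
  e11 A = e11 B -> e12 A = e12 B -> e22 A = e22 B -> A = B.
Proof. destruct A, B; simpl; intros; subst; reflexivity. Qed.

Lemma mul6_assoc A B C : mul6 A (mul6 B C) = mul6 (mul6 A B) C.
Proof. destruct A, B, C; apply m6_eq; simpl; lia. Qed.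

Definition Z6 := M6 0 0 0 0 0 0.
Definition mono (A : m6) : Prop :=
  e00 A <= e01 A /\ e11 A <= e01 A /\ e11 A <= e12 A /\ e22 A <= e12 A /\
  e01 A <= e02 A /\ e12 A <= e02 A.

Lemma mono_mul A B : mono A -> mono B -> mono (mul6 A B).
Proof. destruct A, B; unfold mono; simpl; lia. Qed.
Lemma Z6_l A : mono A -> mul6 Z6 A = A.
Proof. destruct A; unfold mono; intros; apply m6_eq; simpl in *; lia. Qed.
Lemma Z6_mono : mono Z6. Proof. unfold mono; simpl; lia. Qed.

Definition R6 (g : A3 -> m6) (w : list A3) : m6 :=
  fold_right (fun a M => mul6 (g a) M) Z6 w.

Definition gL (a : A3) : m6 := match a with
  | a1 => M6 1 1 1 0 0 0 | a2 => M6 0 1 1 1 1 0 | a3 => M6 0 0 1 0 1 1 end.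
Definition gP (a : A3) : m6 := match a with
  | a1 => M6 1 1 1 1 1 0 | a2 => M6 1 1 1 0 1 1 | a3 => M6 0 1 1 1 1 1 end.

Definition goodg (g : A3 -> m6) : Prop :=
  (forall a, mono (g a)) /\
  (forall x y z, leA x y -> ltA y z -> R6 g [x;z;y] = R6 g [z;x;y]) /\
  (forall x y z, ltA x y -> leA y z -> R6 g [y;x;z] = R6 g [y;z;x]).

Ltac triples := intros x y z H1 H2; destruct x, y, z; unfold leA, ltA, rk in *;
  simpl in *; try lia; reflexivity.

Lemma goodL : goodg gL.
Proof. split; [|split]; [intros []; unfold mono; simpl; lia| triples | triples]. Qed.
Lemma goodP : goodg gP.
Proof. split; [|split]; [intros []; unfold mono; simpl; lia| triples | triples]. Qed.

Section G.
Variable g : A3 -> m6.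
Hypothesis Hg : goodg g.

Lemma R6_mono w : mono (R6 g w).
Proof. induction w; simpl. apply Z6_mono. apply mono_mul; auto. apply Hg. Qed.

Lemma R6_app w1 w2 : R6 g (w1 ++ w2) = mul6 (R6 g w1) (R6 g w2).
Proof.
  induction w1; simpl. rewrite Z6_l; auto using R6_mono.
  rewrite IHw1, mul6_assoc; reflexivity.
Qed.

Lemma R6_knu w w' : knu w w' -> R6 g w = R6 g w'.
Proof.
  induction 1; try congruence.
  - rewrite !R6_app. f_equal. f_equal. apply Hg; auto.
  - rewrite !R6_app. f_equal. f_equal. apply Hg; auto.
Qed.
End G.

Lemma knu_ctx p w w' q : knu w w' -> knu (p ++ w ++ q) (p ++ w' ++ q).
Proof.
  induction 1.
  - apply knu_refl.
  - apply knu_sym; auto.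
  - eapply knu_trans; eauto.
  - replace (p ++ (p0 ++ [x; z; y] ++ q0) ++ q) with ((p ++ p0) ++ [x; z; y] ++ (q0 ++ q))
      by (rewrite <- !app_assoc; reflexivity).
    replace (p ++ (p0 ++ [z; x; y] ++ q0) ++ q) with ((p ++ p0) ++ [z; x; y] ++ (q0 ++ q))
      by (rewrite <- !app_assoc; reflexivity).
    apply knu_K1; auto.
  - replace (p ++ (p0 ++ [y; x; z] ++ q0) ++ q) with ((p ++ p0) ++ [y; x; z] ++ (q0 ++ q))
      by (rewrite <- !app_assoc; reflexivity).
    replace (p ++ (p0 ++ [y; z; x] ++ q0) ++ q) with ((p ++ p0) ++ [y; z; x] ++ (q0 ++ q))
      by (rewrite <- !app_assoc; reflexivity).
    apply knu_K2; auto.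
Qed.

Lemma knu_ctx_eq p w w' q L1 L2 : L1 = p ++ w ++ q -> L2 = p ++ w' ++ q -> knu w w' -> knu L1 L2.
Proof. intros -> ->; apply knu_ctx. Qed.

Lemma repeat_comm (x : A3) k l : repeat x k ++ x :: l = x :: repeat x k ++ l.
Proof. induction k; simpl; congruence. Qed.

Ltac lnorm := simpl; repeat (rewrite <- !app_assoc; simpl);
  repeat (rewrite repeat_comm; simpl); try rewrite app_nil_r; reflexivity.

Lemma K1pow x z k : forall y, leA x y -> ltA y z ->
  knu (repeat x k ++ [z; y]) (z :: repeat x k ++ [y]).
Proof.
  induction k; intros y H1 H2.
  - apply knu_refl.
  - eapply knu_trans.
    + apply (knu_ctx_eq (repeat x k) [x;z;y] [z;x;y] []); [lnorm|reflexivity|].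
      apply (knu_K1 [] []); auto.
    + apply (knu_ctx_eq [] (repeat x k ++ [z;x]) (z :: repeat x k ++ [x]) [y]); [lnorm|lnorm|].
      apply IHk; unfold leA, ltA in *; lia.
Qed.

Lemma K2pow x z k : forall y, ltA x y -> leA y z ->
  knu ([y; x] ++ repeat z k) ([y] ++ repeat z k ++ [x]).
Proof.
  induction k; intros y H1 H2.
  - apply knu_refl.
  - eapply knu_trans.
    + apply (knu_ctx_eq [] [y;x;z] [y;z;x] (repeat z k)); [lnorm|reflexivity|].
      apply (knu_K2 [] []); auto.
    + apply (knu_ctx_eq [y] ([z;x] ++ repeat z k) ([z] ++ repeat z k ++ [x]) []); [lnorm|lnorm|].
      apply IHk; unfold leA, ltA in *; lia.
Qed.

Lemma knu_eq L1 L2 : L1 = L2 -> knu L1 L2.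
Proof. intros ->; apply knu_refl. Qed.

Definition NF (a b c d e f : nat) : list A3 :=
  repeat a3 f ++ repeat a2 d ++ repeat a3 e ++ repeat a1 a ++ repeat a2 b ++ repeat a3 c.
Definition validp (a b c d e f : nat) : Prop := d <= a /\ d + e <= a + b /\ f <= d.

Lemma lt12 : ltA a1 a2. Proof. unfold ltA; simpl; lia. Qed.
Lemma lt13 : ltA a1 a3. Proof. unfold ltA; simpl; lia. Qed.
Lemma lt23 : ltA a2 a3. Proof. unfold ltA; simpl; lia. Qed.
Lemma le_refl' x : leA x x. Proof. unfold leA; lia. Qed.
Lemma le12 : leA a1 a2. Proof. unfold leA; simpl; lia. Qed.
Lemma le23 : leA a2 a3. Proof. unfold leA; simpl; lia. Qed.
Lemma le13 : leA a1 a3. Proof. unfold leA; simpl; lia. Qed.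
#[local] Hint Resolve lt12 lt13 lt23 le_refl' le12 le23 le13 : core.

Ltac step p w w' q H := eapply knu_trans; [apply (knu_ctx_eq p w w' q); [lnorm|reflexivity|H]|].
Notation r1 := (repeat a1). Notation r2 := (repeat a2). Notation r3 := (repeat a3).

Lemma insert_step a b c d e f x : validp a b c d e f ->
  exists a' b' c' d' e' f', validp a' b' c' d' e' f' /\
    knu (NF a b c d e f ++ [x]) (NF a' b' c' d' e' f').
Proof.
  unfold validp; intros V; destruct x.
  - destruct b as [|b].
    + destruct c as [|c].
      * exists (S a), 0, 0, d, e, f; split; [lia|].
        apply knu_eq; unfold NF; lnorm.
      * exists (S a), 0, c, d, (S e), f; split; [lia|]. unfold NF.
        step (r3 f ++ r2 d ++ r3 e ++ r1 a) ([a3] ++ r3 c ++ [a1]) ([a3;a1] ++ r3 c) (@nil A3)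
          ltac:(apply knu_sym, K2pow; auto).
        step (r3 f ++ r2 d ++ r3 e) (r1 a ++ [a3;a1]) (a3 :: r1 a ++ [a1]) (r3 c)
          ltac:(apply K1pow; auto).
        apply knu_eq; lnorm.
    + assert (Hrow1 : knu (NF a (S b) c d e f ++ [a1])
                       (r3 f ++ r2 d ++ r3 e ++ [a2] ++ r1 (S a) ++ r2 b ++ r3 c)).
      { unfold NF.
        step (r3 f ++ r2 d ++ r3 e ++ r1 a ++ r2 b) ([a2] ++ r3 c ++ [a1]) ([a2;a1] ++ r3 c) (@nil A3)
          ltac:(apply knu_sym, K2pow; auto).
        step (r3 f ++ r2 d ++ r3 e ++ r1 a) ([a2] ++ r2 b ++ [a1]) ([a2;a1] ++ r2 b) (r3 c)
          ltac:(apply knu_sym, K2pow; auto).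
        step (r3 f ++ r2 d ++ r3 e) (r1 a ++ [a2;a1]) (a2 :: r1 a ++ [a1]) (r2 b ++ r3 c)
          ltac:(apply K1pow; auto).
        apply knu_eq; lnorm. }
      destruct e as [|e].
      * exists (S a), b, c, (S d), 0, f; split; [lia|].
        eapply knu_trans; [exact Hrow1|]. apply knu_eq; unfold NF; lnorm.
      * exists (S a), b, c, (S d), e, (S f); split; [lia|].
        eapply knu_trans; [exact Hrow1|]. unfold NF.
        step (r3 f ++ r2 d) ([a3] ++ r3 e ++ [a2]) ([a3;a2] ++ r3 e) (r1 (S a) ++ r2 b ++ r3 c)
          ltac:(apply knu_sym, K2pow; auto).
        step (r3 f) (r2 d ++ [a3;a2]) (a3 :: r2 d ++ [a2]) (r3 e ++ r1 (S a) ++ r2 b ++ r3 c)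
          ltac:(apply K1pow; auto).
        apply knu_eq; lnorm.
  - destruct c as [|c].
    + exists a, (S b), 0, d, e, f; split; [lia|]. apply knu_eq; unfold NF; lnorm.
    + exists a, (S b), c, d, (S e), f; split; [lia|]. unfold NF.
      step (r3 f ++ r2 d ++ r3 e ++ r1 a ++ r2 b) ([a3] ++ r3 c ++ [a2]) ([a3;a2] ++ r3 c) (@nil A3)
        ltac:(apply knu_sym, K2pow; auto).
      step (r3 f ++ r2 d ++ r3 e ++ r1 a) (r2 b ++ [a3;a2]) (a3 :: r2 b ++ [a2]) (r3 c)
        ltac:(apply K1pow; auto).
      step (r3 f ++ r2 d ++ r3 e) (r1 a ++ [a3;a2]) (a3 :: r1 a ++ [a2]) (r2 b ++ r3 c)
        ltac:(apply K1pow; auto).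
      apply knu_eq; lnorm.
  - exists a, b, (S c), d, e, f; split; [lia|]. apply knu_eq; unfold NF; lnorm.
Qed.

Lemma normal_form w : exists a b c d e f, validp a b c d e f /\ knu w (NF a b c d e f).
Proof.
  induction w as [|x w IH] using rev_ind.
  - exists 0, 0, 0, 0, 0, 0; split; [unfold validp; lia| apply knu_refl].
  - destruct IH as (a & b & c & d & e & f & V & K).
    destruct (insert_step a b c d e f x V) as (a' & b' & c' & d' & e' & f' & V' & K').
    exists a', b', c', d', e', f'; split; auto.
    eapply knu_trans; [|exact K'].
    apply (knu_ctx_eq [] w (NF a b c d e f) [x]); auto.
Qed.

Lemma R6_rep g x k : R6 g (repeat x k) = Nat.iter k (mul6 (g x)) Z6.
Proof. induction k; simpl; congruence. Qed.

Lemma RL1 k : R6 gL (repeat a1 k) = M6 k k k 0 0 0.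
Proof. induction k; simpl in *; auto. rewrite IHk; apply m6_eq; simpl; lia. Qed.
Lemma RL2 k : R6 gL (repeat a2 k) = M6 0 k k k k 0.
Proof. induction k; simpl in *; auto. rewrite IHk; apply m6_eq; simpl; lia. Qed.
Lemma RL3 k : R6 gL (repeat a3 k) = M6 0 0 k 0 k k.
Proof. induction k; simpl in *; auto. rewrite IHk; apply m6_eq; simpl; lia. Qed.
Lemma RP1 k : R6 gP (repeat a1 k) = M6 k k k k k 0.
Proof. induction k; simpl in *; auto. rewrite IHk; apply m6_eq; simpl; lia. Qed.
Lemma RP2 k : R6 gP (repeat a2 k) = M6 k k k 0 k k.
Proof. induction k; simpl in *; auto. rewrite IHk; apply m6_eq; simpl; lia. Qed.
Lemma RP3 k : R6 gP (repeat a3 k) = M6 0 k k k k k.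
Proof. induction k; simpl in *; auto. rewrite IHk; apply m6_eq; simpl; lia. Qed.

Lemma L_T1 a b c : R6 gL (repeat a1 a ++ repeat a2 b ++ repeat a3 c) = M6 a (a+b) (a+b+c) b (b+c) c.
Proof. rewrite !(R6_app gL goodL), RL1, RL2, RL3. apply m6_eq; simpl; lia. Qed.
Lemma P_T1 a b c : R6 gP (repeat a1 a ++ repeat a2 b ++ repeat a3 c) = M6 (a+b) (a+b+c) (a+b+c) (a+c) (a+b+c) (b+c).
Proof. rewrite !(R6_app gP goodP), RP1, RP2, RP3. apply m6_eq; simpl; lia. Qed.

Lemma L_T2 a b c d e T : d + e <= a + b -> T = M6 a (a+b) (a+b+c) b (b+c) c ->
  let U := mul6 (M6 0 0 e 0 e e) T in
  e00 U = a /\ e01 U = a+b /\ e02 U = a+b+c /\ e11 U = b /\ e12 U = c + max b e /\ e22 U = e+c.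
Proof. intros H ->; cbv zeta; simpl; lia. Qed.
Lemma L_T3 a b c d e T : d <= a -> d + e <= a + b ->
  e00 T = a /\ e01 T = a+b /\ e02 T = a+b+c /\ e11 T = b /\ e12 T = c + max b e /\ e22 T = e+c ->
  let U := mul6 (M6 0 d d d d 0) T in
  e00 U = a /\ e01 U = a+b /\ e02 U = a+b+c /\ e11 U = b+d /\ e12 U <= a+b+c /\ e22 U = e+c.
Proof. destruct T; cbv zeta; simpl; lia. Qed.
Lemma L_T4 a b c d e f T : f <= d -> d <= a -> d + e <= a + b ->
  e00 T = a /\ e01 T = a+b /\ e02 T = a+b+c /\ e11 T = b+d /\ e12 T <= a+b+c /\ e22 T = e+c ->
  let U := mul6 (M6 0 0 f 0 f f) T in
  e00 U = a /\ e01 U = a+b /\ e02 U = a+b+c /\ e11 U = b+d /\ e22 U = c+e+f.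
Proof. destruct T; cbv zeta; simpl; lia. Qed.

Lemma P_T2 a b c e T : T = M6 (a+b) (a+b+c) (a+b+c) (a+c) (a+b+c) (b+c) ->
  let U := mul6 (M6 0 e e e e e) T in
  e02 U = a+b+c+e /\ e12 U <= a+b+c+e /\ e22 U = e+b+c.
Proof. intros ->; cbv zeta; simpl; lia. Qed.
Lemma P_T3 a b c d e T : d <= a -> e02 T = a+b+c+e /\ e12 T <= a+b+c+e /\ e22 T = e+b+c ->
  let U := mul6 (M6 d d d 0 d d) T in
  e02 U = a+b+c+d+e /\ e12 U <= a+b+c+e /\ e22 U = d+e+b+c.
Proof. destruct T; cbv zeta; simpl; lia. Qed.
Lemma P_T4 a b c d e f T : f <= d -> d <= a ->
  e02 T = a+b+c+d+e /\ e12 T <= a+b+c+e /\ e22 T = d+e+b+c ->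
  e02 (mul6 (M6 0 f f f f f) T) = a+b+c+d+e.
Proof. destruct T; cbv zeta; simpl; lia. Qed.

Lemma L_NF a b c d e f : validp a b c d e f ->
  let U := R6 gL (NF a b c d e f) in
  e00 U = a /\ e01 U = a+b /\ e02 U = a+b+c /\ e11 U = b+d /\ e22 U = c+e+f.
Proof.
  unfold validp, NF; intros (V1 & V2 & V3).
  rewrite (R6_app gL goodL (repeat a3 f)), RL3, (R6_app gL goodL (repeat a2 d)), RL2,
    (R6_app gL goodL (repeat a3 e)), RL3, L_T1.
  apply L_T4; auto. apply L_T3; auto. apply (L_T2 a b c d e); auto.
Qed.

Lemma P_NF a b c d e f : validp a b c d e f ->
  e02 (R6 gP (NF a b c d e f)) = a+b+c+d+e.
Proof.
  unfold validp, NF; intros (V1 & V2 & V3).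
  rewrite (R6_app gP goodP (repeat a3 f)), RP3, (R6_app gP goodP (repeat a2 d)), RP2,
    (R6_app gP goodP (repeat a3 e)), RP3, P_T1.
  apply P_T4; auto. apply P_T3; auto. apply (P_T2 a b c e); auto.
Qed.

Lemma NF_inj a b c d e f a' b' c' d' e' f' :
  validp a b c d e f -> validp a' b' c' d' e' f' ->
  R6 gL (NF a b c d e f) = R6 gL (NF a' b' c' d' e' f') ->
  R6 gP (NF a b c d e f) = R6 gP (NF a' b' c' d' e' f') ->
  a = a' /\ b = b' /\ c = c' /\ d = d' /\ e = e' /\ f = f'.
Proof.
  intros V V' HL HP.
  pose proof (L_NF _ _ _ _ _ _ V) as X. pose proof (L_NF _ _ _ _ _ _ V') as X'.
  pose proof (P_NF _ _ _ _ _ _ V) as Y. pose proof (P_NF _ _ _ _ _ _ V') as Y'.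
  simpl in X, X'. rewrite HL in X. rewrite HP in Y.
  destruct X as (X1&X2&X3&X4&X5), X' as (X1'&X2'&X3'&X4'&X5').
  lia.
Qed.

Lemma knu_of_R6 w w' : R6 gL w = R6 gL w' -> R6 gP w = R6 gP w' -> knu w w'.
Proof.
  intros HL HP.
  destruct (normal_form w) as (a & b & c & d & e & f & V & K).
  destruct (normal_form w') as (a' & b' & c' & d' & e' & f' & V' & K').
  rewrite (R6_knu gL goodL _ _ K), (R6_knu gL goodL _ _ K') in HL.
  rewrite (R6_knu gP goodP _ _ K), (R6_knu gP goodP _ _ K') in HP.
  destruct (NF_inj _ _ _ _ _ _ _ _ _ _ _ _ V V' HL HP) as (->&->&->&->&->&->).
  eapply knu_trans; [exact K| apply knu_sym; exact K'].
Qed.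

Definition emb (M : m6) : mat := fun i j =>
  match i, j with
  | 0, 0 => Some (INR (e00 M)) | 0, 1 => Some (INR (e01 M)) | 0, 2 => Some (INR (e02 M))
  | 1, 1 => Some (INR (e11 M)) | 1, 2 => Some (INR (e12 M)) | 2, 2 => Some (INR (e22 M))
  | _, _ => None end.

Lemma INR_max a b : INR (max a b) = Rmax (INR a) (INR b).
Proof.
  destruct (Nat.le_ge_cases a b) as [H|H].
  - rewrite Nat.max_r by exact H. rewrite Rmax_right; auto. apply le_INR; auto.
  - rewrite Nat.max_l by exact H. rewrite Rmax_left; auto. apply le_INR; auto.
Qed.

Lemma emb_upper M : upper (emb M).
Proof. intros i j Hi Hj Hji. destruct i as [|[|[|i]]]; destruct j as [|[|[|j]]]; simpl; auto; lia. Qed.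

Lemma emb_mul A B : meq (mmul (emb A) (emb B)) (emb (mul6 A B)).
Proof.
  intros i j Hi Hj. destruct i as [|[|[|i]]]; try lia; destruct j as [|[|[|j]]]; try lia;
  unfold mmul, emb; simpl; rewrite ?INR_max, ?plus_INR; reflexivity.
Qed.

Lemma mmul_meq X X' Y Y' : meq X X' -> meq Y Y' -> meq (mmul X Y) (mmul X' Y').
Proof.
  intros HX HY i j Hi Hj. unfold mmul.
  rewrite (HX i 0), (HX i 1), (HX i 2), (HY 0 j), (HY 1 j), (HY 2 j); auto; lia.
Qed.

Lemma meq_trans X Y Z : meq X Y -> meq Y Z -> meq X Z.
Proof. intros H1 H2 i j Hi Hj; rewrite H1, H2; auto. Qed.

Lemma Z6_r A : mono A -> mul6 A Z6 = A.
Proof. destruct A; unfold mono; intros; apply m6_eq; simpl in *; lia. Qed.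

Section Ev.
Variable g : A3 -> m6.
Hypothesis Hg : goodg g.
Variable phi : nat -> list A3.
Let Phi := fun x => emb (R6 g (phi x)).

Lemma fold_meq u : forall M A, mono A -> meq M (emb A) ->
  meq (fold_left (fun M y => mmul M (Phi y)) u M) (emb (mul6 A (R6 g (concat (map phi u))))).
Proof.
  induction u as [|y u IH]; intros M A HA HM; simpl.
  - rewrite Z6_r; auto.
  - eapply meq_trans.
    + apply (IH _ (mul6 A (R6 g (phi y)))).
      * apply mono_mul; auto. apply R6_mono; auto.
      * eapply meq_trans; [apply mmul_meq; [exact HM| intros i j _ _; reflexivity]|].
        apply emb_mul.
    + rewrite (R6_app g Hg), mul6_assoc. intros i j _ _; reflexivity.
Qed.

Lemma meval_meq u : u <> [] -> meq (meval Phi u) (emb (R6 g (concat (map phi u)))).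
Proof.
  destruct u as [|x u]; [congruence|]. intros _. simpl.
  rewrite (R6_app g Hg). apply fold_meq. apply R6_mono; auto.
  intros i j _ _; reflexivity.
Qed.

Lemma Phi_upper x : upper (Phi x).
Proof. apply emb_upper. Qed.
End Ev.

Lemma emb_inj A B : meq (emb A) (emb B) -> A = B.
Proof.
  intros H.
  assert (E : forall x y, Some (INR x) = Some (INR y) -> x = y)
    by (intros x y Hxy; injection Hxy; apply INR_eq).
  apply m6_eq; apply E;
  [apply (H 0 0)|apply (H 0 1)|apply (H 0 2)|apply (H 1 1)|apply (H 1 2)|apply (H 2 2)]; lia.
Qed.

Lemma part1 (u v : word) : u <> [] -> v <> [] -> TMat3_satisfies u v -> P3_satisfies u v.
Proof.
  intros Hu Hv HT phi.
  assert (K : forall g, goodg g -> R6 g (concat (map phi u)) = R6 g (concat (map phi v))).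
  { intros g Hg. apply emb_inj.
    specialize (HT (fun x => emb (R6 g (phi x))) (fun x => emb_upper _)).
    eapply meq_trans; [|eapply meq_trans; [exact HT|]].
    - intros i j Hi Hj; symmetry; apply (meval_meq g Hg phi u Hu); auto.
    - apply meval_meq; auto. }
  apply knu_of_R6; apply K; [apply goodL|apply goodP].
Qed.

Definition vec := list nat.
Fixpoint vadd (f g : vec) : vec :=
  match f, g with
  | [], _ => g
  | _, [] => f
  | x :: f', y :: g' => (x + y) :: vadd f' g'
  end.
Fixpoint evf (v f : vec) : nat :=
  match v, f with
  | x :: v', c :: f' => c * x + evf v' f'
  | _, _ => 0
  end.
Definition vscale (w : nat) (f : vec) : vec := map (Nat.mul w) f.
Definition tpoly := list vec.
Definition evp (v : vec) (p : tpoly) : nat := fold_right (fun f acc => max (evf v f) acc) 0 p.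
Definition pmul (p q : tpoly) : tpoly := flat_map (fun f => map (vadd f) q) p.

Lemma evf_vadd v : forall f g, evf v (vadd f g) = evf v f + evf v g.
Proof.
  induction v as [|x v IH]; intros [|c f] [|d g]; simpl; auto; try lia.
  rewrite IH; lia.
Qed.
Lemma evf_vscale v : forall w f, evf v (vscale w f) = w * evf v f.
Proof.
  induction v as [|x v IH]; intros w [|c f]; simpl; auto; try lia.
  unfold vscale in *; rewrite IH; lia.
Qed.
Lemma evf_nil v : evf v [] = 0. Proof. destruct v; reflexivity. Qed.

Lemma evp_app v p q : evp v (p ++ q) = max (evp v p) (evp v q).
Proof. induction p; simpl; [lia|]. rewrite IHp; lia. Qed.

Lemma evp_map_vadd v f q : q <> [] -> evp v (map (vadd f) q) = evf v f + evp v q.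
Proof.
  induction q as [|g q IH]; intros H; [congruence|].
  destruct q as [|h q].
  - simpl. rewrite evf_vadd; lia.
  - change (max (evf v (vadd f g)) (evp v (map (vadd f) (h :: q))) =
            evf v f + max (evf v g) (evp v (h :: q))).
    rewrite IH by discriminate. rewrite evf_vadd; lia.
Qed.

Lemma pmul_ne p q : p <> [] -> q <> [] -> pmul p q <> [].
Proof.
  destruct p as [|f p]; [congruence|]; destruct q as [|g q]; [congruence|].
  intros _ _; simpl; discriminate.
Qed.

Lemma evp_pmul v p q : p <> [] -> q <> [] -> evp v (pmul p q) = evp v p + evp v q.
Proof.
  induction p as [|f p IH]; intros Hp Hq; [congruence|].
  unfold pmul; simpl; fold (pmul p q). rewrite evp_app, evp_map_vadd by auto.
  destruct p as [|f' p].
  - simpl. lia.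
  - rewrite IH by (auto; discriminate). simpl. lia.
Qed.

Record s6 := S6 { s00 : tpoly; s01 : tpoly; s02 : tpoly; s11 : tpoly; s12 : tpoly; s22 : tpoly }.
Definition smul (A B : s6) : s6 :=
  S6 (pmul (s00 A) (s00 B))
     (pmul (s00 A) (s01 B) ++ pmul (s01 A) (s11 B))
     ((pmul (s00 A) (s02 B) ++ pmul (s01 A) (s12 B)) ++ pmul (s02 A) (s22 B))
     (pmul (s11 A) (s11 B))
     (pmul (s11 A) (s12 B) ++ pmul (s12 A) (s22 B))
     (pmul (s22 A) (s22 B)).
Definition evs (v : vec) (S : s6) : m6 :=
  M6 (evp v (s00 S)) (evp v (s01 S)) (evp v (s02 S)) (evp v (s11 S)) (evp v (s12 S)) (evp v (s22 S)).
Definition sne (S : s6) : Prop :=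
  s00 S <> [] /\ s01 S <> [] /\ s02 S <> [] /\ s11 S <> [] /\ s12 S <> [] /\ s22 S <> [].

Lemma app_ne (p q : tpoly) : p <> [] -> p ++ q <> [].
Proof. destruct p; [congruence|]; discriminate. Qed.

Lemma smul_ne A B : sne A -> sne B -> sne (smul A B).
Proof.
  intros (?&?&?&?&?&?) (?&?&?&?&?&?); unfold sne; simpl;
  repeat split; repeat apply app_ne; apply pmul_ne; auto.
Qed.

Lemma evs_smul v A B : sne A -> sne B -> evs v (smul A B) = mul6 (evs v A) (evs v B).
Proof.
  intros (?&?&?&?&?&?) (?&?&?&?&?&?); unfold evs, mul6; simpl.
  rewrite !evp_app, !evp_pmul by auto. reflexivity.
Qed.

Definition unitv (k : nat) : vec := map (fun i => if Nat.eqb i k then 1 else 0) (seq 0 12).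
Definition symA : s6 := S6 [unitv 0] [unitv 1] [unitv 2] [unitv 3] [unitv 4] [unitv 5].
Definition symB : s6 := S6 [unitv 6] [unitv 7] [unitv 8] [unitv 9] [unitv 10] [unitv 11].
Definition symZ : s6 := let z := [@nil nat] in S6 z z z z z z.
Definition vars (A B : m6) : vec :=
  [e00 A; e01 A; e02 A; e11 A; e12 A; e22 A; e00 B; e01 B; e02 B; e11 B; e12 B; e22 B].

Definition sprod (s : list bool) : s6 := fold_right (fun (b : bool) (X : s6) => smul (if b then symA else symB) X) symZ s.
Definition mprod (A B : m6) (s : list bool) : m6 := fold_right (fun (b : bool) (M : m6) => mul6 (if b then A else B) M) Z6 s.

Lemma symA_ne : sne symA. Proof. unfold sne; simpl; repeat split; discriminate. Qed.
Lemma symB_ne : sne symB. Proof. unfold sne; simpl; repeat split; discriminate. Qed.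
Lemma symZ_ne : sne symZ. Proof. unfold sne; simpl; repeat split; discriminate. Qed.

Lemma sprod_ne s : sne (sprod s).
Proof. induction s as [|b s IH]; simpl. apply symZ_ne. apply smul_ne; auto. destruct b; [apply symA_ne|apply symB_ne]. Qed.

Lemma evs_SA A B : evs (vars A B) symA = A.
Proof. destruct A, B; apply m6_eq; simpl; lia. Qed.
Lemma evs_SB A B : evs (vars A B) symB = B.
Proof. destruct A, B; apply m6_eq; simpl; lia. Qed.
Lemma evs_SZ A B : evs (vars A B) symZ = Z6.
Proof. destruct A, B; apply m6_eq; simpl; lia. Qed.

Lemma evs_sprod A B s : evs (vars A B) (sprod s) = mprod A B s.
Proof.
  induction s as [|b s IH]; simpl. apply evs_SZ.
  rewrite evs_smul. rewrite IH. destruct b; [rewrite evs_SA|rewrite evs_SB]; reflexivity.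
  destruct b; [apply symA_ne|apply symB_ne]. apply sprod_ne.
Qed.

Fixpoint vsum (l : list vec) : vec := match l with [] => [] | f :: l' => vadd f (vsum l') end.
Fixpoint vec_eqb (f g : vec) : bool :=
  match f, g with
  | [], [] => true
  | x :: f', y :: g' => Nat.eqb x y && vec_eqb f' g'
  | _, _ => false
  end.
Lemma vec_eqb_eq f g : vec_eqb f g = true -> f = g.
Proof.
  revert g; induction f as [|x f IH]; intros [|y g]; simpl; try congruence.
  intros H; apply andb_true_iff in H as [H1 H2]. apply Nat.eqb_eq in H1. f_equal; auto.
Qed.

Definition sumw (c : list (nat * nat)) : nat := fold_right (fun p acc => fst p + acc) 0 c.
Definition check_one (f : vec) (q : tpoly) (c : list (nat * nat)) : bool :=
  Nat.ltb 0 (sumw c) &&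
  vec_eqb (vsum (map (fun p => vscale (fst p) (nth (snd p) q [])) c)) (vscale (sumw c) f).
Fixpoint check_all (p q : tpoly) (cs : list (list (nat * nat))) : bool :=
  match p, cs with
  | [], _ => true
  | f :: p', c :: cs' => check_one f q c && check_all p' q cs'
  | _, _ => false
  end.

Lemma evf_le_evp v q i : evf v (nth i q []) <= evp v q.
Proof.
  revert i; induction q as [|g q IH]; intros [|i]; simpl; try (rewrite evf_nil; lia).
  - lia.
  - specialize (IH i). lia.
Qed.

Lemma evf_vsum v l : evf v (vsum l) = fold_right (fun f acc => evf v f + acc) 0 l.
Proof. induction l; simpl. apply evf_nil. rewrite evf_vadd, IHl; reflexivity. Qed.

Lemma check_one_sound v f q c : check_one f q c = true -> evf v f <= evp v q.
Proof.
  unfold check_one; intros H; apply andb_true_iff in H as [H1 H2].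
  apply Nat.ltb_lt in H1. apply vec_eqb_eq in H2.
  assert (E : sumw c * evf v f = fold_right (fun p acc => fst p * evf v (nth (snd p) q []) + acc) 0 c).
  { rewrite <- evf_vscale, <- H2, evf_vsum. clear.
    induction c as [|[w i] c IH]; simpl; auto. rewrite IH, evf_vscale; reflexivity. }
  assert (B : fold_right (fun p acc => fst p * evf v (nth (snd p) q []) + acc) 0 c <= sumw c * evp v q).
  { clear. induction c as [|[w i] c IH]; simpl; auto.
    pose proof (Nat.mul_le_mono_l _ _ w (evf_le_evp v q i)).
    change (sumw ((w, i) :: c)) with (w + sumw c).
    rewrite Nat.mul_add_distr_r. simpl fst; simpl snd. apply Nat.add_le_mono; [exact H|exact IH]. }
  assert (E2 : sumw c * evf v f <= sumw c * evp v q) by lia.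
  apply (Nat.mul_le_mono_pos_l _ _ (sumw c)); lia.
Qed.

Lemma check_all_sound v p q cs : check_all p q cs = true -> evp v p <= evp v q.
Proof.
  revert cs; induction p as [|f p IH]; intros [|c cs]; simpl; try lia; try congruence.
  intros H; apply andb_true_iff in H as [H1 H2].
  pose proof (check_one_sound v _ _ _ H1). pose proof (IH _ H2). lia.
Qed.

Definition cert00_LR : list (list (nat*nat)) :=
 [[(1,0)]].

Definition cert00_RL : list (list (nat*nat)) :=
 [[(1,0)]].

Definition cert01_LR : list (list (nat*nat)) :=
 [[(1,0)];
 [(1,1)];
 [(1,2)];
 [(1,3)];
 [(1,4)];
 [(1,5)];
 [(1,6)];
 [(1,7)];
 [(1,8)];
 [(1,9)];
 [(1,10)];
 [(1,11)];
 [(1,12)];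
 [(1,1); (6,15)];
 [(1,2); (6,16)];
 [(1,15)];
 [(1,16)];
 [(1,17)];
 [(1,18)];
 [(1,19)];
 [(1,20)];
 [(1,21)];
 [(1,22)];
 [(1,23)];
 [(1,24)];
 [(1,25)];
 [(1,26)]].

Definition cert01_RL : list (list (nat*nat)) :=
 [[(1,0)];
 [(1,1)];
 [(1,2)];
 [(1,3)];
 [(1,4)];
 [(1,5)];
 [(1,6)];
 [(1,7)];
 [(1,8)];
 [(1,9)];
 [(1,10)];
 [(1,11)];
 [(1,12)];
 [(2,3); (5,17)];
 [(2,4); (5,18)];
 [(1,15)];
 [(1,16)];
 [(1,17)];
 [(1,18)];
 [(1,19)];
 [(1,20)];
 [(1,21)];
 [(1,22)];
 [(1,23)];
 [(1,24)];
 [(1,25)];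
 [(1,26)]].

Definition cert02_LR : list (list (nat*nat)) :=
 [[(1,0)];
 [(1,1)];
 [(1,2)];
 [(1,3)];
 [(1,4)];
 [(1,5)];
 [(1,6)];
 [(1,7)];
 [(1,8)];
 [(1,9)];
 [(1,10)];
 [(1,11)];
 [(1,12)];
 [(1,13)];
 [(1,14)];
 [(1,15)];
 [(1,16)];
 [(1,17)];
 [(1,18)];
 [(1,19)];
 [(1,20)];
 [(1,21)];
 [(1,22)];
 [(1,23)];
 [(1,24)];
 [(1,25)];
 [(1,26)];
 [(1,27)];
 [(1,28)];
 [(1,29)];
 [(1,30)];
 [(1,31)];
 [(1,32)];
 [(1,33)];
 [(1,34)];
 [(1,35)];
 [(1,36)];
 [(1,37)];
 [(1,38)];
 [(1,39)];
 [(1,40)];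
 [(1,41)];
 [(1,42)];
 [(1,43)];
 [(1,44)];
 [(1,45)];
 [(1,46)];
 [(1,47)];
 [(1,48)];
 [(1,49)];
 [(1,50)];
 [(1,51)];
 [(1,52)];
 [(1,53)];
 [(1,54)];
 [(1,55)];
 [(1,56)];
 [(1,57)];
 [(1,58)];
 [(1,59)];
 [(1,60)];
 [(1,61)];
 [(1,62)];
 [(1,63)];
 [(1,64)];
 [(1,65)];
 [(1,66)];
 [(1,67)];
 [(1,68)];
 [(1,69)];
 [(1,70)];
 [(1,71)];
 [(1,72)];
 [(1,73)];
 [(1,74)];
 [(1,75)];
 [(1,76)];
 [(1,77)];
 [(1,78)];
 [(1,79)];
 [(1,80)];
 [(1,81)];
 [(1,82)];
 [(1,83)];
 [(1,84)];
 [(1,85)];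
 [(1,86)];
 [(1,87)];
 [(1,88)];
 [(1,89)];
 [(1,90)];
 [(1,1); (6,120)];
 [(1,29); (3,121)];
 [(1,30); (3,122)];
 [(1,31); (3,123)];
 [(1,32); (3,124)];
 [(1,33); (3,125)];
 [(1,34); (3,126)];
 [(1,29); (3,129)];
 [(1,30); (3,130)];
 [(1,246); (3,52); (2,129)];
 [(3,53); (2,130); (1,247)];
 [(1,33); (3,133)];
 [(1,34); (3,134)];
 [(1,2); (6,135)];
 [(1,3); (6,136)];
 [(1,4); (6,137)];
 [(1,38); (3,138)];
 [(1,39); (3,139)];
 [(1,40); (3,140)];
 [(1,41); (3,141)];
 [(1,42); (3,142)];
 [(1,37); (3,145)];
 [(1,38); (3,146)];
 [(1,64); (2,145)];
 [(1,269); (3,63); (2,146)];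
 [(1,41); (3,149)];
 [(1,42); (3,150)];
 [(1,4); (6,151)];
 [(1,5); (6,152)];
 [(1,120)];
 [(1,121)];
 [(1,122)];
 [(1,123)];
 [(1,124)];
 [(1,125)];
 [(1,126)];
 [(1,127)];
 [(1,128)];
 [(1,129)];
 [(1,130)];
 [(1,131)];
 [(1,132)];
 [(4,52); (3,297)];
 [(4,53); (3,298)];
 [(1,135)];
 [(1,136)];
 [(1,137)];
 [(1,138)];
 [(1,139)];
 [(1,140)];
 [(1,141)];
 [(1,142)];
 [(1,143)];
 [(1,144)];
 [(1,145)];
 [(1,146)];
 [(1,147)];
 [(1,148)];
 [(4,62); (3,321)];
 [(4,63); (3,322)];
 [(1,151)];
 [(1,152)];
 [(1,153)];
 [(1,154)];
 [(1,155)];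
 [(1,156)];
 [(1,157)];
 [(1,158)];
 [(1,159)];
 [(1,160)];
 [(1,161)];
 [(1,162)];
 [(1,163)];
 [(1,164)];
 [(1,165)];
 [(1,16); (6,205)];
 [(1,17); (6,206)];
 [(1,168)];
 [(1,169)];
 [(1,170)];
 [(1,171)];
 [(1,172)];
 [(1,173)];
 [(1,174)];
 [(1,175)];
 [(1,176)];
 [(1,177)];
 [(1,178)];
 [(1,179)];
 [(1,180)];
 [(1,181)];
 [(1,182)];
 [(1,183)];
 [(1,22); (6,225)];
 [(1,23); (6,226)];
 [(1,186)];
 [(1,187)];
 [(1,188)];
 [(1,189)];
 [(1,190)];
 [(1,191)];
 [(1,192)];
 [(1,193)];
 [(1,194)];
 [(1,195)];
 [(1,196)];
 [(1,197)];
 [(1,198)];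
 [(1,199)];
 [(1,200)];
 [(1,201)];
 [(1,202)];
 [(3,168); (1,332)];
 [(3,169); (1,333)];
 [(1,205)];
 [(1,206)];
 [(1,207)];
 [(1,208)];
 [(1,209)];
 [(1,210)];
 [(1,211)];
 [(1,212)];
 [(1,213)];
 [(1,214)];
 [(1,215)];
 [(1,216)];
 [(1,217)];
 [(1,218)];
 [(1,219)];
 [(1,220)];
 [(1,221)];
 [(1,222)];
 [(3,186); (1,358)];
 [(3,187); (1,359)];
 [(1,225)];
 [(1,226)];
 [(1,227)];
 [(1,228)];
 [(1,229)];
 [(1,230)];
 [(1,231)];
 [(1,232)];
 [(1,233)];
 [(1,234)];
 [(1,235)];
 [(1,236)];
 [(1,237)];
 [(1,238)];
 [(1,239)];
 [(1,240)];
 [(1,241)];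
 [(1,242)];
 [(1,243)];
 [(1,46); (6,291)];
 [(1,47); (6,292)];
 [(1,246)];
 [(1,247)];
 [(1,248)];
 [(1,249)];
 [(1,250)];
 [(1,251)];
 [(1,252)];
 [(1,253)];
 [(1,254)];
 [(1,255)];
 [(1,256)];
 [(1,257)];
 [(1,258)];
 [(1,259)];
 [(1,260)];
 [(1,261)];
 [(1,262)];
 [(1,263)];
 [(1,264)];
 [(1,265)];
 [(1,56); (6,315)];
 [(1,57); (6,316)];
 [(1,268)];
 [(1,269)];
 [(1,270)];
 [(1,271)];
 [(1,272)];
 [(1,273)];
 [(1,274)];
 [(1,275)];
 [(1,276)];
 [(1,277)];
 [(1,278)];
 [(1,279)];
 [(1,280)];
 [(1,281)];
 [(1,282)];
 [(1,283)];
 [(1,284)];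
 [(1,285)];
 [(1,286)];
 [(1,287)];
 [(1,288)];
 [(1,277); (6,291)];
 [(1,278); (6,292)];
 [(1,291)];
 [(1,292)];
 [(1,293)];
 [(1,294)];
 [(1,295)];
 [(1,296)];
 [(1,297)];
 [(1,298)];
 [(1,299)];
 [(1,300)];
 [(1,301)];
 [(1,302)];
 [(1,303)];
 [(1,304)];
 [(1,305)];
 [(1,306)];
 [(1,307)];
 [(1,308)];
 [(1,309)];
 [(1,310)];
 [(1,311)];
 [(1,312)];
 [(1,301); (6,315)];
 [(1,302); (6,316)];
 [(1,315)];
 [(1,316)];
 [(1,317)];
 [(1,318)];
 [(1,319)];
 [(1,320)];
 [(1,321)];
 [(1,322)];
 [(1,323)];
 [(1,324)];
 [(1,325)];
 [(1,326)];
 [(1,327)];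
 [(1,328)];
 [(1,329)];
 [(1,330)];
 [(1,331)];
 [(1,332)];
 [(1,333)];
 [(1,334)];
 [(1,335)];
 [(1,336)];
 [(1,337)];
 [(1,326); (6,340)];
 [(1,327); (6,341)];
 [(1,340)];
 [(1,341)];
 [(1,342)];
 [(1,343)];
 [(1,344)];
 [(1,345)];
 [(1,346)];
 [(1,347)];
 [(1,348)];
 [(1,349)];
 [(1,350)];
 [(1,351)];
 [(1,352)];
 [(1,353)];
 [(1,354)];
 [(1,355)];
 [(1,356)];
 [(1,357)];
 [(1,358)];
 [(1,359)];
 [(1,360)];
 [(1,361)];
 [(1,362)];
 [(1,363)];
 [(1,352); (6,366)];
 [(1,353); (6,367)];
 [(1,366)];
 [(1,367)];
 [(1,368)];
 [(1,369)];
 [(1,370)];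
 [(1,371)];
 [(1,372)];
 [(1,373)];
 [(1,374)];
 [(1,375)];
 [(1,376)];
 [(1,377)]].

Definition cert02_RL : list (list (nat*nat)) :=
 [[(1,0)];
 [(1,1)];
 [(1,2)];
 [(1,3)];
 [(1,4)];
 [(1,5)];
 [(1,6)];
 [(1,7)];
 [(1,8)];
 [(1,9)];
 [(1,10)];
 [(1,11)];
 [(1,12)];
 [(1,13)];
 [(1,14)];
 [(1,15)];
 [(1,16)];
 [(1,17)];
 [(1,18)];
 [(1,19)];
 [(1,20)];
 [(1,21)];
 [(1,22)];
 [(1,23)];
 [(1,24)];
 [(1,25)];
 [(1,26)];
 [(1,27)];
 [(1,28)];
 [(1,29)];
 [(1,30)];
 [(1,31)];
 [(1,32)];
 [(1,33)];
 [(1,34)];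
 [(1,35)];
 [(1,36)];
 [(1,37)];
 [(1,38)];
 [(1,39)];
 [(1,40)];
 [(1,41)];
 [(1,42)];
 [(1,43)];
 [(1,44)];
 [(1,45)];
 [(1,46)];
 [(1,47)];
 [(1,48)];
 [(1,49)];
 [(1,50)];
 [(1,51)];
 [(1,52)];
 [(1,53)];
 [(1,54)];
 [(1,55)];
 [(1,56)];
 [(1,57)];
 [(1,58)];
 [(1,59)];
 [(1,60)];
 [(1,61)];
 [(1,62)];
 [(1,63)];
 [(1,64)];
 [(1,65)];
 [(1,66)];
 [(1,67)];
 [(1,68)];
 [(1,69)];
 [(1,70)];
 [(1,71)];
 [(1,72)];
 [(1,73)];
 [(1,74)];
 [(1,75)];
 [(1,76)];
 [(1,77)];
 [(1,78)];
 [(1,79)];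
 [(1,80)];
 [(1,81)];
 [(1,82)];
 [(1,83)];
 [(1,84)];
 [(1,85)];
 [(1,86)];
 [(1,87)];
 [(1,88)];
 [(1,89)];
 [(1,90)];
 [(2,6); (5,153)];
 [(2,7); (5,154)];
 [(2,8); (5,155)];
 [(1,18); (2,156)];
 [(1,19); (2,157)];
 [(3,69); (1,201)];
 [(3,70); (1,202)];
 [(2,73); (1,160)];
 [(2,74); (1,161)];
 [(1,16); (2,166)];
 [(1,17); (2,167)];
 [(3,18); (4,207)];
 [(3,19); (4,208)];
 [(2,9); (5,170)];
 [(2,10); (5,171)];
 [(2,11); (5,172)];
 [(2,12); (5,173)];
 [(2,13); (5,174)];
 [(1,25); (2,175)];
 [(1,26); (2,176)];
 [(3,82); (1,222)];
 [(2,85); (1,178)];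
 [(2,86); (1,179)];
 [(1,22); (2,184)];
 [(1,23); (2,185)];
 [(3,24); (4,227)];
 [(3,25); (4,228)];
 [(2,13); (5,188)];
 [(2,14); (5,189)];
 [(1,120)];
 [(1,121)];
 [(1,122)];
 [(1,123)];
 [(1,124)];
 [(1,125)];
 [(1,126)];
 [(1,127)];
 [(1,128)];
 [(1,129)];
 [(1,130)];
 [(1,131)];
 [(1,132)];
 [(3,33); (4,250)];
 [(3,34); (4,251)];
 [(1,135)];
 [(1,136)];
 [(1,137)];
 [(1,138)];
 [(1,139)];
 [(1,140)];
 [(1,141)];
 [(1,142)];
 [(1,143)];
 [(1,144)];
 [(1,145)];
 [(1,146)];
 [(1,147)];
 [(1,148)];
 [(3,41); (4,272)];
 [(3,42); (4,273)];
 [(1,151)];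
 [(1,152)];
 [(1,153)];
 [(1,154)];
 [(1,155)];
 [(1,156)];
 [(1,157)];
 [(1,158)];
 [(1,159)];
 [(1,160)];
 [(1,161)];
 [(1,162)];
 [(1,163)];
 [(1,164)];
 [(1,165)];
 [(7,201); (3,18); (11,207)];
 [(7,202); (3,19); (11,208)];
 [(1,168)];
 [(1,169)];
 [(1,170)];
 [(1,171)];
 [(1,172)];
 [(1,173)];
 [(1,174)];
 [(1,175)];
 [(1,176)];
 [(1,177)];
 [(1,178)];
 [(1,179)];
 [(1,180)];
 [(1,181)];
 [(1,182)];
 [(1,183)];
 [(2,174); (5,188)];
 [(7,222); (3,25); (11,228)];
 [(1,186)];
 [(1,187)];
 [(1,188)];
 [(1,189)];
 [(1,190)];
 [(1,191)];
 [(1,192)];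
 [(1,193)];
 [(1,194)];
 [(1,195)];
 [(1,196)];
 [(1,197)];
 [(1,198)];
 [(1,199)];
 [(1,200)];
 [(1,201)];
 [(1,202)];
 [(3,71); (4,344)];
 [(3,72); (4,345)];
 [(1,205)];
 [(1,206)];
 [(1,207)];
 [(1,208)];
 [(1,209)];
 [(1,210)];
 [(1,211)];
 [(1,212)];
 [(1,213)];
 [(1,214)];
 [(1,215)];
 [(1,216)];
 [(1,217)];
 [(1,218)];
 [(1,219)];
 [(1,220)];
 [(1,221)];
 [(1,222)];
 [(3,83); (4,370)];
 [(3,84); (4,371)];
 [(1,225)];
 [(1,226)];
 [(1,227)];
 [(1,228)];
 [(1,229)];
 [(1,230)];
 [(1,231)];
 [(1,232)];
 [(1,233)];
 [(1,234)];
 [(1,235)];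
 [(1,236)];
 [(1,237)];
 [(1,238)];
 [(1,239)];
 [(1,240)];
 [(1,241)];
 [(1,242)];
 [(1,243)];
 [(2,234); (5,248)];
 [(2,235); (5,249)];
 [(1,246)];
 [(1,247)];
 [(1,248)];
 [(1,249)];
 [(1,250)];
 [(1,251)];
 [(1,252)];
 [(1,253)];
 [(1,254)];
 [(1,255)];
 [(1,256)];
 [(1,257)];
 [(1,258)];
 [(1,259)];
 [(1,260)];
 [(1,261)];
 [(1,262)];
 [(1,263)];
 [(1,264)];
 [(1,265)];
 [(2,256); (5,270)];
 [(2,257); (5,271)];
 [(1,268)];
 [(1,269)];
 [(1,270)];
 [(1,271)];
 [(1,272)];
 [(1,273)];
 [(1,274)];
 [(1,275)];
 [(1,276)];
 [(1,277)];
 [(1,278)];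
 [(1,279)];
 [(1,280)];
 [(1,281)];
 [(1,282)];
 [(1,283)];
 [(1,284)];
 [(1,285)];
 [(1,286)];
 [(1,287)];
 [(1,288)];
 [(2,279); (5,293)];
 [(2,280); (5,294)];
 [(1,291)];
 [(1,292)];
 [(1,293)];
 [(1,294)];
 [(1,295)];
 [(1,296)];
 [(1,297)];
 [(1,298)];
 [(1,299)];
 [(1,300)];
 [(1,301)];
 [(1,302)];
 [(1,303)];
 [(1,304)];
 [(1,305)];
 [(1,306)];
 [(1,307)];
 [(1,308)];
 [(1,309)];
 [(1,310)];
 [(1,311)];
 [(1,312)];
 [(2,303); (5,317)];
 [(2,304); (5,318)];
 [(1,315)];
 [(1,316)];
 [(1,317)];
 [(1,318)];
 [(1,319)];
 [(1,320)];
 [(1,321)];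
 [(1,322)];
 [(1,323)];
 [(1,324)];
 [(1,325)];
 [(1,326)];
 [(1,327)];
 [(1,328)];
 [(1,329)];
 [(1,330)];
 [(1,331)];
 [(1,332)];
 [(1,333)];
 [(1,334)];
 [(1,335)];
 [(1,336)];
 [(1,337)];
 [(2,328); (5,342)];
 [(2,329); (5,343)];
 [(1,340)];
 [(1,341)];
 [(1,342)];
 [(1,343)];
 [(1,344)];
 [(1,345)];
 [(1,346)];
 [(1,347)];
 [(1,348)];
 [(1,349)];
 [(1,350)];
 [(1,351)];
 [(1,352)];
 [(1,353)];
 [(1,354)];
 [(1,355)];
 [(1,356)];
 [(1,357)];
 [(1,358)];
 [(1,359)];
 [(1,360)];
 [(1,361)];
 [(1,362)];
 [(1,363)];
 [(2,354); (5,368)];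
 [(2,355); (5,369)];
 [(1,366)];
 [(1,367)];
 [(1,368)];
 [(1,369)];
 [(1,370)];
 [(1,371)];
 [(1,372)];
 [(1,373)];
 [(1,374)];
 [(1,375)];
 [(1,376)];
 [(1,377)]].

Definition cert11_LR : list (list (nat*nat)) :=
 [[(1,0)]].

Definition cert11_RL : list (list (nat*nat)) :=
 [[(1,0)]].

Definition cert12_LR : list (list (nat*nat)) :=
 [[(1,0)];
 [(1,1)];
 [(1,2)];
 [(1,3)];
 [(1,4)];
 [(1,5)];
 [(1,6)];
 [(1,7)];
 [(1,8)];
 [(1,9)];
 [(1,10)];
 [(1,11)];
 [(1,12)];
 [(1,1); (6,15)];
 [(1,2); (6,16)];
 [(1,15)];
 [(1,16)];
 [(1,17)];
 [(1,18)];
 [(1,19)];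
 [(1,20)];
 [(1,21)];
 [(1,22)];
 [(1,23)];
 [(1,24)];
 [(1,25)];
 [(1,26)]].

Definition cert12_RL : list (list (nat*nat)) :=
 [[(1,0)];
 [(1,1)];
 [(1,2)];
 [(1,3)];
 [(1,4)];
 [(1,5)];
 [(1,6)];
 [(1,7)];
 [(1,8)];
 [(1,9)];
 [(1,10)];
 [(1,11)];
 [(1,12)];
 [(2,3); (5,17)];
 [(2,4); (5,18)];
 [(1,15)];
 [(1,16)];
 [(1,17)];
 [(1,18)];
 [(1,19)];
 [(1,20)];
 [(1,21)];
 [(1,22)];
 [(1,23)];
 [(1,24)];
 [(1,25)];
 [(1,26)]].

Definition cert22_LR : list (list (nat*nat)) :=
 [[(1,0)]].

Definition cert22_RL : list (list (nat*nat)) :=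
 [[(1,0)]].

Definition wtb : list bool := [false;true;true;false;true;false;false;true;false;true;true;false].
Definition sL : list bool := wtb ++ [true;false] ++ wtb.
Definition sR : list bool := wtb ++ [false;true] ++ wtb.

Lemma mprod_id A B : mprod A B sL = mprod A B sR.
Proof.
  rewrite <- !evs_sprod. unfold evs.
  assert (H : forall (f : s6 -> tpoly) c1 c2, check_all (f (sprod sL)) (f (sprod sR)) c1 = true ->
     check_all (f (sprod sR)) (f (sprod sL)) c2 = true ->
     evp (vars A B) (f (sprod sL)) = evp (vars A B) (f (sprod sR))).
  { intros f c1 c2 H1 H2. apply Nat.le_antisymm; eapply check_all_sound; eauto. }
  apply m6_eq; simpl.
  - apply (H s00 cert00_LR cert00_RL); vm_compute; reflexivity.
  - apply (H s01 cert01_LR cert01_RL); vm_compute; reflexivity.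
  - apply (H s02 cert02_LR cert02_RL); vm_compute; reflexivity.
  - apply (H s11 cert11_LR cert11_RL); vm_compute; reflexivity.
  - apply (H s12 cert12_LR cert12_RL); vm_compute; reflexivity.
  - apply (H s22 cert22_LR cert22_RL); vm_compute; reflexivity.
Qed.

Definition pw (U V : list A3) (s : list bool) : list A3 := concat (map (fun b : bool => if b then U else V) s).

Lemma R6_pw g (Hg : goodg g) U V s : R6 g (pw U V s) = mprod (R6 g U) (R6 g V) s.
Proof.
  induction s as [|b s IH]; simpl; auto.
  unfold pw in *; simpl. rewrite (R6_app g Hg), IH. destruct b; reflexivity.
Qed.

Lemma part2 (U V : list A3) :
     let x := U ++ V in
     let y := V ++ U in
     let wt := y ++ x ++ x ++ y ++ y ++ x in
     knu (wt ++ x ++ wt) (wt ++ y ++ wt).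
Proof.
  cbv zeta.
  replace (((V ++ U) ++ (U ++ V) ++ (U ++ V) ++ (V ++ U) ++ (V ++ U) ++ U ++ V) ++ (U ++ V) ++
      (V ++ U) ++ (U ++ V) ++ (U ++ V) ++ (V ++ U) ++ (V ++ U) ++ U ++ V)
    with (pw U V sL) by (unfold pw; simpl; repeat rewrite app_nil_r; repeat rewrite <- app_assoc; reflexivity).
  replace (((V ++ U) ++ (U ++ V) ++ (U ++ V) ++ (V ++ U) ++ (V ++ U) ++ U ++ V) ++ (V ++ U) ++
      (V ++ U) ++ (U ++ V) ++ (U ++ V) ++ (V ++ U) ++ (V ++ U) ++ U ++ V)
    with (pw U V sR) by (unfold pw; simpl; repeat rewrite app_nil_r; repeat rewrite <- app_assoc; reflexivity).
  apply knu_of_R6; rewrite !R6_pw by (apply goodL || apply goodP); apply mprod_id.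
Qed.

Theorem mainTheorem16 :
  (forall u v : word, u <> [] -> v <> [] -> u <> v ->
     TMat3_satisfies u v -> P3_satisfies u v)
  /\
  (forall U V : list A3,
     let x := U ++ V in
     let y := V ++ U in
     let wt := y ++ x ++ x ++ y ++ y ++ x in
     knu (wt ++ x ++ wt) (wt ++ y ++ wt)).
Proof.
  split.
  - intros u v Hu Hv _; apply part1; auto.
  - exact part2.
Qed.
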